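(* Let $\sigma>0$ and consider any $T$-round $\sigma$-chasable Dd-MDP instance together with a finite collection $\Gamma$ of policies. Then the algorithm C\&S (run with a chasing oracle witnessing $\sigma$-chasability and an OLSC algorithm $\mathcal{A}$ with switching cost $\Delta=\sigma$) has regret with respect to $\Gamma$ at most $O\left(\sqrt{\sigma\cdot T\log|\Gamma|}\right)$.
   Context: Dynamic deterministic MDP (Dd-MDP): there is a finite state set $\mathcal{S}$, a finite action set $\mathcal{X}$, and for each $s\in\mathcal{S}$ a set $X_s\subseteq\mathcal{X}$ of feasible actions. The game lasts $T$ rounds and starts at an initial state $s_1$. In round $t$ the decision maker plays a (possibly randomized) action $x_t\in X_{s_t}$; simultaneously an adversary chooses a state transition function $g_t$ (mapping each pair $(s,x)$ with $x\in X_s$ to a state) and a reward function $f_t$ (mapping each such pair to $[0,1]$). The decision maker moves to $s_{t+1}=g_t(s_t,x_t)$, obtains reward $f_t(s_t,x_t)$, and then observes $g_t$ and $f_t$ (full information). A policy is a map $\gamma:\mathcal{S}\to\mathcal{X}$ with $\gamma(s)\in X_s$. Its simulation is $s^\gamma_1=s_1$, $x^\gamma_t=\gamma(s^\gamma_t)$, $s^\gamma_{t}=g_{t-1}(s^\gamma_{t-1},x^\gamma_{t-1})$ for $t>1$. For a finite set $\Gamma$ of policies, the regret is $\max_{\gamma\in\Gamma}\sum_{t=1}^T f_t(s^\gamma_t,x^\gamma_t)-\sum_{t=1}^T\mathbb{E}[f_t(s_t,x_t)]$. $\sigma$-chasability: the instance admits a (possibly randomized) chasing oracle such that for any target policy $\gamma\in\Gamma$,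 whenever the oracle is invoked at the beginning of some round $t_{\mathrm{init}}$ with an arbitrary initial state $s_{\mathrm{init}}\in\mathcal{S}$ (possibly different from $s^\gamma_{t_{\mathrm{init}}}$), it produces in each round $t\ge t_{\mathrm{init}}$ an action $\hat{x}(t)$ feasible for $\hat{s}(t)$, where $\hat s(t_{\mathrm{init}})=s_{\mathrm{init}}$ and $\hat s(t)=g_{t-1}(\hat s(t-1),\hat x(t-1))$, after which it is given $g_t$ and $f_t$; and for every halting round $t_{\mathrm{final}}\ge t_{\mathrm{init}}$ its chasing regret satisfies $\sum_{t=t_{\mathrm{init}}}^{t_{\mathrm{final}}} f_t(s^\gamma_t,x^\gamma_t)-\sum_{t=t_{\mathrm{init}}}^{t_{\mathrm{final}}}\mathbb{E}[f_t(\hat s(t),\hat x(t))]\le\sigma$. Online learning with switching cost (OLSC): experts form a finite set $\Gamma$; in each round $t\in[T]$ the learner picks $\gamma_t\in\Gamma$, then a reward function $F_t:\Gamma\to[0,1)$ is revealed; the regret is $\max_{\gamma\in\Gamma}\sum_t F_t(\gamma)-\big(\sum_t\mathbb{E}[F_t(\gamma_t)]-\Delta\sum_{t=2}^T\mathbb{1}[\gamma_t\ne\gamma_{t-1}]\big)$ where $\Delta>0$ is the switching cost. $\mathcal{A}$ denotes an OLSC algorithm with regret $O(\sqrt{\Delta T\log|\Gamma|})$ (such algorithms exist, e.g. follow-the-perturbed-leader). Algorithm C\&S: start at $s_1$. In each round $t$, invoke $\mathcal{A}$ to pick $\gamma_t\in\Gamma$. If $t>1$ and $\gamma_t\neq\gamma_{t-1}$,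 invoke the chasing oracle from scratch with target policy $\gamma_t$, initial round $t$ and initial state $s_t$ (in round 1 the oracle is likewise started with target $\gamma_1$ and state $s_1$); otherwise continue the current run of the oracle. Play the action $x_t$ returned by the oracle, feed the oracle $g_t,f_t$, and feed $\mathcal{A}$ the reward function $F_t(\gamma)=f_t(s^\gamma_t,x^\gamma_t)$ for all $\gamma\in\Gamma$. *)

(* Defs.v *)
From HB Require Import structures.
From mathcomp Require Import all_boot all_order all_algebra.
From mathcomp Require Import reals exp.
Set Implicit Arguments.
Unset Strict Implicit.
Unset Printing Implicit Defensive.
Import Order.TTheory GRing.Theory Num.Theory.
Local Open Scope ring_scope.

(* Rounds are 0-indexed: round t of the paper is round t-1 here, rounds 0..T-1. *)

(* A (finitely supported) distribution on an arbitrary type A: a list of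
   (weight, outcome) pairs.  Since the horizon T and all state/action/policy
   sets are finite, every randomized component (run against the fixed,
   oblivious adversary of the instance) induces such a distribution on its
   output sequence. *)
Definition is_dist (R : numDomainType) (A : Type) (d : seq (R * A)) : Prop :=
  all (fun p => 0 <= p.1) d /\ \sum_(p <- d) p.1 = 1.

Definition expect (R : numDomainType) (A : Type) (d : seq (R * A)) (h : A -> R) : R :=
  \sum_(p <- d) p.1 * h p.2.

Fixpoint sim (S X : Type) (g : nat -> S -> X -> S) (s1 : S) (p : S -> X) (t : nat) : S :=
  match t with
  | 0 => s1
  | t'.+1 => g t' (sim g s1 p t') (p (sim g s1 p t'))
  end.

Fixpoint run (S X : Type) (g : nat -> S -> X -> S) (t0 : nat) (s0 : S)
    (xs : nat -> X) (k : nat) : S :=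
  match k with
  | 0 => s0
  | k'.+1 => g (t0 + k')%N (run g t0 s0 xs k') (xs (t0 + k')%N)
  end.

Definition pol_reward (R : numDomainType) (S X : Type) (g : nat -> S -> X -> S)
    (f : nat -> S -> X -> R) (s1 : S) (p : S -> X) (t : nat) : R :=
  f t (sim g s1 p t) (p (sim g s1 p t)).

(* A chasing oracle: for target policy (index) gam, initial round t0 and
   initial state s0, [orc gam t0 s0] is the distribution of the sequence of
   actions it plays in rounds t0, t0+1, ... (fresh randomness per invocation).
   It witnesses sigma-chasability of the instance if, for every target in
   Gamma, every t0 < T and every s0: it is a distribution, its actions are
   feasible along the induced trajectory, and for every halting round
   t_final = t0 + n - 1 <= T - 1 its expected chasing regret is <= sigma. *)
Definition chasing_oracle_ok (R : numDomainType) (S X G : finType)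
    (Xs : S -> {set X}) (T : nat) (s1 : S) (g : nat -> S -> X -> S)
    (f : nat -> S -> X -> R) (pol : G -> S -> X) (sigma : R)
    (orc : G -> nat -> S -> seq (R * (nat -> X))) : Prop :=
  forall (gam : G) (t0 : nat) (s0 : S), (t0 < T)%N ->
    [/\ is_dist (orc gam t0 s0),
        all (fun p => (0 < p.1) ==>
               all (fun k => p.2 (t0 + k)%N \in Xs (run g t0 s0 p.2 k))
                   (iota 0 (T - t0)))
            (orc gam t0 s0)
      & forall n : nat, (0 < n)%N -> (t0 + n <= T)%N ->
          \sum_(k < n) pol_reward g f s1 (pol gam) (t0 + k)%N
          - expect (orc gam t0 s0)
              (fun xs => \sum_(k < n) f (t0 + k)%N (run g t0 s0 xs k) (xs (t0 + k)%N))
          <= sigma].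

(* An OLSC algorithm over experts G: given the (oblivious) reward sequence F,
   the distribution of the sequence of chosen experts. *)
Definition reward_seq_ok (R : numDomainType) (G : Type) (T : nat)
    (F : nat -> G -> R) : Prop :=
  forall t gam, (t < T)%N -> 0 <= F t gam <= 1.

(* causality: the joint law of the choices in rounds 0..t depends only on
   the rewards of rounds 0..t-1 *)
Definition olsc_causal (R : numDomainType) (G : finType) (T : nat)
    (A : (nat -> G -> R) -> seq (R * (nat -> G))) : Prop :=
  forall (F F' : nat -> G -> R) (t : nat), (t < T)%N ->
    (forall i gam, (i < t)%N -> F i gam = F' i gam) ->
    forall pre : nat -> G,
      expect (A F) (fun o => (all (fun i => o i == pre i) (iota 0 t.+1))%:R)
      = expect (A F') (fun o => (all (fun i => o i == pre i) (iota 0 t.+1))%:R).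

Definition olsc_regret (R : numDomainType) (G : finType) (T : nat) (Delta : R)
    (A : (nat -> G -> R) -> seq (R * (nat -> G))) (F : nat -> G -> R) (gam : G) : R :=
  \sum_(t < T) F t gam
  - expect (A F) (fun o => \sum_(t < T) F t (o t)
                           - Delta * \sum_(1 <= t < T) (o t != o t.-1)%:R).

(* Expected reward collected in rounds t, ..., t+n-1 by C&S when A's choice
   sequence is o, the state at the start of round t is s and the current
   oracle run plays the action sequence cur. *)
Fixpoint cs_val (R : numDomainType) (S X G : finType) (g : nat -> S -> X -> S)
    (f : nat -> S -> X -> R) (orc : G -> nat -> S -> seq (R * (nat -> X)))
    (o : nat -> G) (n t : nat) (s : S) (cur : nat -> X) : R :=
  match n with
  | 0 => 0
  | n'.+1 =>
    if (t == 0)%N || (o t != o t.-1) then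
      \sum_(p <- orc (o t) t s)
         p.1 * (f t s (p.2 t) + cs_val g f orc o n' t.+1 (g t s (p.2 t)) p.2)
    else f t s (cur t) + cs_val g f orc o n' t.+1 (g t s (cur t)) cur
  end.

Definition cs_feed (R : numDomainType) (S X G : finType) (g : nat -> S -> X -> S)
    (f : nat -> S -> X -> R) (s1 : S) (pol : G -> S -> X) : nat -> G -> R :=
  fun t gam => pol_reward g f s1 (pol gam) t.

Definition cs_expected_reward (R : numDomainType) (S X G : finType) (T : nat)
    (s1 : S) (g : nat -> S -> X -> S) (f : nat -> S -> X -> R) (pol : G -> S -> X)
    (orc : G -> nat -> S -> seq (R * (nat -> X)))
    (A : (nat -> G -> R) -> seq (R * (nat -> G))) : R :=
  expect (A (cs_feed g f s1 pol))
    (fun o => cs_val g f orc o T 0 s1 (fun _ => pol (o 0%N) s1)).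

(* Main.v *)
Require Import Defs.
From HB Require Import structures.
From mathcomp Require Import all_boot all_order all_algebra.
From mathcomp Require Import reals exp.
From mathcomp Require Import lra zify.
Import Order.TTheory GRing.Theory Num.Theory.
Set Implicit Arguments.
Unset Strict Implicit.
Local Open Scope ring_scope.

Definition st (G : eqType) (o : nat -> G) (t : nat) : bool :=
  (t == 0)%N || (o t != o t.-1).
Arguments st {G}.

Lemma run_shift (S X : Type) (g : nat -> S -> X -> S) t s xs k :
  run g t s xs k.+1 = run g t.+1 (g t s (xs t)) xs k.
Proof.
elim: k => [|k IH]; first by rewrite /= addn0.
by rewrite -[LHS]/(g (t + k.+1) (run g t s xs k.+1) (xs (t + k.+1))) IH /= addSnnS.
Qed.

Lemma cont (R : numDomainType) (S X G : finType) (g : nat -> S -> X -> S)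
    (f : nat -> S -> X -> R) (orc : G -> nat -> S -> seq (R * (nat -> X)))
    (o : nat -> G) j : forall n t s cur, (j <= n)%N ->
  (forall i, (t <= i < t + j)%N -> ~~ st o i) ->
  cs_val g f orc o n t s cur =
  \sum_(k < j) f (t + k)%N (run g t s cur k) (cur (t + k)%N)
  + cs_val g f orc o (n - j) (t + j) (run g t s cur j) cur.
Proof.
elim: j => [|j IH] n t s cur hjn H.
  by rewrite big_ord0 add0r subn0 addn0.
case: n hjn => [//|n] hjn.
have Ht : ~~ st o t by apply: H; rewrite leqnn /= -addn1 leq_add2l.
rewrite /= -/(st o t) (negbTE Ht).
rewrite (IH n t.+1 (g t s (cur t)) cur) //; last first.
  move=> i /andP [h1 h2]; apply: H; rewrite (ltnW h1) /=.
  by rewrite addnS; apply: leq_trans h2 _; rewrite addSn.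
rewrite big_ord_recl addrA subSS.
congr (_ + _ + _); first by rewrite addn0.
  by apply: eq_bigr => k _; rewrite lift0 run_shift addnS addSn.
by rewrite addSnnS -run_shift.
Qed.

Lemma decomp (R : numDomainType) (S X G : finType) (g : nat -> S -> X -> S)
    (f : nat -> S -> X -> R) (orc : G -> nat -> S -> seq (R * (nat -> X)))
    (o : nat -> G) j n t s cur : st o t -> (0 < j <= n)%N ->
  (forall i, (t < i < t + j)%N -> ~~ st o i) ->
  cs_val g f orc o n t s cur =
  \sum_(p <- orc (o t) t s) p.1 *
    (\sum_(k < j) f (t + k)%N (run g t s p.2 k) (p.2 (t + k)%N)
     + cs_val g f orc o (n - j) (t + j) (run g t s p.2 j) p.2).
Proof.
move=> Ht; case: j => [//|j]; case: n => [//|n] /= hjn H.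
rewrite -/(st o t) Ht; apply: eq_bigr => p _; congr (_ * _).
rewrite (@cont _ _ _ _ g f orc o j n t.+1) //; last first.
  move=> i /andP [h1 h2]; apply: H; rewrite h1 /=.
  by rewrite addnS; apply: leq_trans h2 _; rewrite addSn.
rewrite big_ord_recl addrA subSS.
congr (_ + _ + _); first by rewrite addn0.
  by apply: eq_bigr => k _; rewrite lift0 run_shift addnS addSn.
by rewrite addSnnS -run_shift.
Qed.

Lemma find_block (G : eqType) (o : nat -> G) n t : (0 < n)%N ->
  exists j, [/\ (0 < j <= n)%N, (j == n) || st o (t + j)
            & forall i, (t < i < t + j)%N -> ~~ st o i].
Proof.
case: n => [//|n] _; elim: n => [|n [j [hj1 hj2 hj3]]].
  exists 1%N; split => // i /andP [h1 h2]; move: h2; rewrite addn1 ltnS => h2.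
  by move: h1; rewrite ltnNge h2.
case/andP: hj1 => hj0 hjn.
have [ltjn|eqjn] := ltnP j n.+1.
  exists j; split => //; first by rewrite hj0 ltnW.
  by move: hj2; rewrite (ltn_eqF ltjn) /= => ->; rewrite orbT.
have ej : j = n.+1 by apply/eqP; rewrite eqn_leq hjn eqjn.
subst j.
case hs: (st o (t + n.+1)).
  by exists n.+1; split => //; rewrite ?hs ?orbT ?leqnSn.
exists n.+2; split => //; first by rewrite eqxx.
move=> i /andP [h1 h2]; rewrite addnS ltnS leq_eqVlt in h2.
case/orP: h2 => [/eqP ->|h2]; first by rewrite hs.
by apply: hj3; rewrite h1.
Qed.

Lemma block_const (G : eqType) (o : nat -> G) t j :
  (forall i, (t < i < t + j)%N -> ~~ st o i) ->
  forall k, (k < j)%N -> o (t + k)%N = o t.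
Proof.
move=> H; elim => [|k IH] hk; first by rewrite addn0.
have := H (t + k.+1)%N; rewrite ltn_add2l hk -{1}(addn0 t) ltn_add2l ltn0Sn /st addnS /=.
by move=> /(_ isT); rewrite negbK => /eqP ->; apply: IH; apply: ltnW.
Qed.

Lemma sum_split (R : nmodType) (F : nat -> R) t j m :
  \sum_(k < j + m) F (t + k)%N =
  \sum_(k < j) F (t + k)%N + \sum_(k < m) F (t + j + k)%N.
Proof. by rewrite big_split_ord /=; congr (_ + _); apply: eq_bigr => k _; rewrite addnA. Qed.

Lemma ler_sum_all (R : numDomainType) (A : Type) (P : pred (R * A)) (w : seq (R * A))
    (F1 F2 : R * A -> R) :
  all P w -> (forall p, P p -> F1 p <= F2 p) ->
  \sum_(p <- w) F1 p <= \sum_(p <- w) F2 p.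
Proof.
elim: w => [|p w IH] /=; first by rewrite !big_nil.
by rewrite !big_cons => /andP [h1 h2] H; apply: lerD; [apply: H | apply: IH].
Qed.

Lemma all_and (A : Type) (P Q : pred A) (w : seq A) :
  all P w -> all Q w -> all (fun x => P x && Q x) w.
Proof. by elim: w => [|x w IH] //= /andP [-> h1] /andP [-> h2] /=; apply: IH. Qed.

Lemma lower (R : realType) (S X G : finType) (Xs : S -> {set X}) (T : nat) (s1 : S)
    (g : nat -> S -> X -> S) (f : nat -> S -> X -> R) (pol : G -> S -> X) (sigma : R)
    (orc : G -> nat -> S -> seq (R * (nat -> X))) (o : nat -> G) :
  chasing_oracle_ok Xs T s1 g f pol sigma orc ->
  forall n t s cur, st o t || (n == 0)%N -> (t + n <= T)%N ->
  \sum_(k < n) pol_reward g f s1 (pol (o (t + k)%N)) (t + k)%N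
  - sigma * \sum_(k < n) (st o (t + k)%N)%:R <= cs_val g f orc o n t s cur.
Proof.
move=> Hc n0; elim: n0.+1 {-2}n0 (ltnSn n0) => [//|N IH] n hn t s cur hst htn.
case: n hn hst htn => [|n] hn hst htn; first by rewrite /= !big_ord0 mulr0 subr0.
move: hst; rewrite orbF => hst.
have [j [/andP [hj0 hjn] hjs hjb]] := @find_block _ o n.+1 t (ltn0Sn n).
rewrite (@decomp _ _ _ _ g f orc o j n.+1 t s cur hst) ?hj0 ?hjn //.
have htT : (t < T)%N by apply: leq_trans htn; rewrite addnS ltnS leq_addr.
have [hd _ hch] := Hc (o t) t s htT.
have hjT : (t + j <= T)%N by apply: leq_trans htn; rewrite leq_add2l.
have := hch j hj0 hjT.
rewrite /expect => hch'.
have L1 := sum_split (fun i => pol_reward g f s1 (pol (o i)) i) t j (n.+1 - j).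
rewrite subnKC // in L1; rewrite L1 {L1}.
have L2 := sum_split (fun i => (st o i)%:R : R) t j (n.+1 - j).
rewrite subnKC // in L2; rewrite L2 {L2}.
have -> : \sum_(k < j) pol_reward g f s1 (pol (o (t + k)%N)) (t + k)%N
        = \sum_(k < j) pol_reward g f s1 (pol (o t)) (t + k)%N.
  by apply: eq_bigr => k _; rewrite (block_const hjb).
have -> : \sum_(k < j) (st o (t + k)%N)%:R = 1 :> R.
  case: j hj0 hjn hjs hjb hch' hjT => [//|j] _ hjn hjs hjb _ _.
  rewrite big_ord_recl addn0 hst big1 ?addr0 // => k _.
  rewrite (negbTE (hjb _ _)) // lift0 -{1}(addn0 t) ltn_add2l /= ltn_add2l.
  by rewrite ltnS ltn_ord.
set B := \sum_(k < n.+1 - j) _.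
set C := \sum_(k < n.+1 - j) _.
have HIH : forall p : R * (nat -> X), B - sigma * C <=
    cs_val g f orc o (n.+1 - j) (t + j) (run g t s p.2 j) p.2.
  move=> p; apply: IH.
  - by move: hn hj0; clear; lia.
  - move: hjs; case/orP => [/eqP ->|->] //; by rewrite subnn eqxx orbT.
  - by rewrite -addnA subnKC.
set E := \sum_(p <- orc _ _ _) _ in hch'.
apply: (@le_trans _ _ (E + (B - sigma * C))); first by rewrite mulrDr mulr1; lra.
rewrite /E.
have -> : B - sigma * C = \sum_(p <- orc (o t) t s) p.1 * (B - sigma * C).
  by rewrite -big_distrl /= hd.2 mul1r.
rewrite -big_split /=; apply: (ler_sum_all hd.1) => p hp.
by rewrite -mulrDr; apply: ler_wpM2l => //; rewrite lerD2l.
Qed.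

Lemma nonneg (R : realType) (S X G : finType) (Xs : S -> {set X}) (T : nat) (s1 : S)
    (g : nat -> S -> X -> S) (f : nat -> S -> X -> R) (pol : G -> S -> X) (sigma : R)
    (orc : G -> nat -> S -> seq (R * (nat -> X))) (o : nat -> G) :
  (forall t s x, (t < T)%N -> x \in Xs s -> 0 <= f t s x <= 1) ->
  chasing_oracle_ok Xs T s1 g f pol sigma orc ->
  forall n t s cur, st o t || (n == 0)%N -> (t + n <= T)%N ->
  0 <= cs_val g f orc o n t s cur.
Proof.
move=> Hf Hc n0; elim: n0.+1 {-2}n0 (ltnSn n0) => [//|N IH] n hn t s cur hst htn.
case: n hn hst htn => [|n] hn hst htn; first by [].
move: hst; rewrite orbF => hst.
have [j [/andP [hj0 hjn] hjs hjb]] := @find_block _ o n.+1 t (ltn0Sn n).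
rewrite (@decomp _ _ _ _ g f orc o j n.+1 t s cur hst) ?hj0 ?hjn //.
have htT : (t < T)%N by apply: leq_trans htn; rewrite addnS ltnS leq_addr.
have [[hd1 hd2] hfe _] := Hc (o t) t s htT.
have hall := all_and hd1 hfe.
apply: (@le_trans _ _ (\sum_(p <- orc (o t) t s) (0 : R))); first by rewrite big1_eq.
apply: (ler_sum_all hall) => p /andP [/= hp0 hpf].
move: hp0; rewrite le_eqVlt => /orP [/eqP <-|hp]; first by rewrite mul0r.
apply: mulr_ge0; first exact: ltW.
move: hpf; rewrite hp /= => hpf.
apply: addr_ge0.
  apply: sumr_ge0 => k _.
  have hkT : (k < T - t)%N by move: htn hjn (ltn_ord k); clear; lia.
  have := allP hpf k; rewrite mem_iota add0n hkT => /(_ isT) hx.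
  have htk : (t + k < T)%N by move: htn hjn (ltn_ord k); clear; lia.
  by case/andP: (Hf _ _ _ htk hx).
apply: IH.
- by move: hn hj0; clear; lia.
- move: hjs; case/orP => [/eqP ->|->] //; by rewrite subnn eqxx orbT.
- by rewrite -addnA subnKC.
Qed.
Lemma ln_ge_half (R : realType) (x : R) : 2 <= x -> 1 / 2 <= ln x.
Proof.
move=> hx.
have xp : 0 < x by apply: lt_le_trans hx; lra.
have h1 : -1 < x^-1 - 1 by rewrite ltrBrDr addrC subrr invr_gt0.
have := le_ln1Dx h1; rewrite addrC subrK lnV ?posrE //.
have : x^-1 <= 2^-1 by rewrite lef_pV2 ?posrE //; lra.
lra.
Qed.

Lemma le_sqrt_of_sq (R : realType) (a b : R) : 0 <= a -> a ^+ 2 <= b -> a <= Num.sqrt b.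
Proof.
move=> ha hab.
have hb : 0 <= b by apply: le_trans hab; apply: sqr_ge0.
by rewrite -(ger0_norm ha) -sqrtr_sqr ler_sqrt.
Qed.

Lemma two_sqrt (R : realType) (b : R) : 2 * Num.sqrt b = Num.sqrt (4 * b).
Proof.
rewrite sqrtrM; last lra.
have -> : (4 : R) = 2 ^+ 2 by rewrite expr2; lra.
by rewrite sqrtr_sqr ger0_norm //; lra.
Qed.

Lemma st_count (G : eqType) (R : numDomainType) (o : nat -> G) (T : nat) :
  \sum_(k < T) (st o (0 + k)%N)%:R <= 1 + \sum_(1 <= t < T) (o t != o t.-1)%:R :> R.
Proof.
case: T => [|T]; first by rewrite big_ord0 big_geq // addr0 ler01.
rewrite big_ord_recl /st /= addrC [leRHS]addrC lerD2r.
rewrite -(add0n 1%N) big_addn subn1 /= big_mkord.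
rewrite le_eqVlt; apply/orP; left; apply/eqP.
by apply: eq_bigr => k _; rewrite /bump /= !add0n addn1.
Qed.

Lemma expect_ge (R : realType) (A : Type) (d : seq (R * A)) (h1 h2 : A -> R) :
  is_dist d -> (forall a, h1 a <= h2 a) -> expect d h1 <= expect d h2.
Proof.
move=> [hd _] H; apply: (ler_sum_all hd) => p hp.
by apply: ler_wpM2l.
Qed.

Lemma expect_const (R : realType) (A : Type) (d : seq (R * A)) (h : A -> R) (c : R) :
  is_dist d -> expect d (fun a => h a - c) = expect d h - c.
Proof.
move=> [_ hs]; rewrite /expect.
under eq_bigr => p _ do rewrite mulrBr.
by rewrite sumrB -big_distrl /= hs mul1r.
Qed.

Theorem theorem4 (R : realType) (c : R) (hc : 0 <= c) :
  exists C : R, 0 <= C /\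
  forall (S X G : finType) (Xs : S -> {set X}) (T : nat) (s1 : S)
         (g : nat -> S -> X -> S) (f : nat -> S -> X -> R)
         (pol : G -> S -> X) (sigma : R)
         (orc : G -> nat -> S -> seq (R * (nat -> X)))
         (A : (nat -> G -> R) -> seq (R * (nat -> G))),
    0 < sigma ->
    (forall t s x, (t < T)%N -> x \in Xs s -> 0 <= f t s x <= 1) ->
    (forall gam s, pol gam s \in Xs s) ->
    (forall gam gam', (forall s, pol gam s = pol gam' s) -> gam = gam') ->
    (2 <= #|G|)%N ->
    chasing_oracle_ok Xs T s1 g f pol sigma orc ->
    (forall F, reward_seq_ok T F -> is_dist (A F)) ->
    olsc_causal T A ->
    (forall F, reward_seq_ok T F -> forall gam : G,
        olsc_regret T sigma A F gam
          <= c * Num.sqrt (sigma * T%:R * ln (#|G|%:R))) ->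
    forall gam : G,
      \sum_(t < T) pol_reward g f s1 (pol gam) t
      - cs_expected_reward T s1 g f pol orc A
      <= C * Num.sqrt (sigma * T%:R * ln (#|G|%:R)).
Proof.
exists (c + 2); split; first lra.
move=> S X G Xs T s1 g f pol sigma orc A hsig Hf Hpol _ hG Hc HA _ Hreg gam.
set F := cs_feed g f s1 pol.
have HF : reward_seq_ok T F.
  by move=> t gm ht; rewrite /F /cs_feed /pol_reward; apply: Hf.
have hd := HA F HF.
have hreg := Hreg F HF gam.
set Q := Num.sqrt _ in hreg *.
set V := cs_expected_reward _ _ _ _ _ _ _.
set Fg := \sum_(t < T) _.
have hQ : 0 <= Q by apply: sqrtr_ge0.
have b1 : Fg - V <= c * Q + sigma.
  have hV : expect (A F) (fun o => \sum_(t < T) F t (o t)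
             - sigma * \sum_(1 <= t < T) (o t != o t.-1)%:R) - sigma <= V.
    rewrite -expect_const //; apply: expect_ge => // o.
    apply: le_trans (lower Hc (n:=T) (t:=0) s1 _ _ _); last 2 first.
    - by rewrite /st eqxx.
    - by rewrite add0n.
    have := st_count R o T.
    have -> : \sum_(k < T) pol_reward g f s1 (pol (o (0 + k)%N)) (0 + k)%N
            = \sum_(t < T) F t (o t) by apply: eq_bigr => k _; rewrite add0n.
    move: hsig; clear; set a := \sum_(k < T) _; set b := \sum_(i < T) _; set d := \sum_(_ <= _ < _) _.
    move=> hsig h. have := ler_wpM2l (ltW hsig) h. rewrite mulrDr mulr1. lra.
  move: hreg; rewrite /olsc_regret -/Fg; lra.
have b2 : Fg - V <= T%:R.
  have hFg : Fg <= T%:R.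
    apply: (@le_trans _ _ (\sum_(t < T) (1 : R))); last by rewrite sumr_const card_ord.
    apply: ler_sum => t _; rewrite /pol_reward.
    by have /andP [] := Hf _ _ _ (ltn_ord t) (Hpol gam (sim g s1 (pol gam) t)).
  have hV0 : 0 <= V.
    rewrite /V /cs_expected_reward.
    have -> : (0 : R) = expect (A F) (fun _ => 0) by rewrite /expect big1 // => p _; rewrite mulr0.
    apply: expect_ge => // o.
    by apply: (nonneg Hf Hc) => //; rewrite /st eqxx.
  lra.
have hln : 1 / 2 <= ln (#|G|%:R : R) by apply: ln_ge_half; rewrite (ler_nat R 2).
have hT0 : 0 <= T%:R :> R by apply: ler0n.
have hm : Num.min sigma T%:R <= 2 * Q.
  rewrite /Q two_sqrt; apply: le_sqrt_of_sq.
    by rewrite le_min (ltW hsig) hT0.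
  have h1 : Num.min sigma T%:R ^+ 2 <= sigma * T%:R.
    rewrite expr2; apply: ler_pM; rewrite ?le_min ?(ltW hsig) ?hT0 //.
    + by rewrite ge_min lexx.
    + by rewrite ge_min lexx orbT.
  apply: le_trans h1 _.
  have := ler_wpM2l (mulr_ge0 (ltW hsig) hT0) hln.
  set z := sigma * T%:R. move=> h; have hz : 0 <= z by apply: mulr_ge0 => //; apply: ltW.
  rewrite mulrA [4 * z]mulrC -mulrA; lra.
rewrite mulrDl.
case: (leP sigma T%:R) hm => h hm.
  by apply: le_trans b1 _; rewrite lerD2l.
have hcQ := mulr_ge0 hc hQ; apply: le_trans b2 _; lra.
Qed.
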